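(* Let $k\in\{2,3\}$, let $C$ and $C'$ be configurations of g-$k$PATH, let $v\in C$, and let $t\ge0$ be an integer with $\mathrm{d}_C(\mathbf{0},v)\le t$. Then $C\equiv'_{t,v}C'$ if and only if $C'$ is a consistent extension of the subset $M(v,t,C)$ of $C$.
   Context: Positions are elements of $\mathbb{Z}^k$; $\mathbf 0$ is the origin. Let $\epsilon_0,\dots,\epsilon_{2k-1}$ be the $2k$ vectors $\pm e_1,\dots,\pm e_k$ (unit coordinate vectors and their negatives) in a fixed order; positions $p,p'$ are adjacent if $p'-p$ is one of them. A configuration of g-$k$PATH is a sequence $p_r p_{r+1}\dots p_s$ ($r\le0\le s$) of positions with $p_0=\mathbf 0$, $p_l$ and $p_{l+1}$ adjacent for all $r\le l<s$, all $p_l$ distinct, and $p_l,p_m$ not adjacent whenever $|l-m|\ge2$; it is identified with its set of positions. For a configuration $C$ and $p,p'\in C$, $\mathrm{d}_C(p,p')$ is the number of steps of a shortest path from $p$ to $p'$ inside $C$ (consecutive positions adjacent). For $p\in C$, $\mathrm{bc}_C(p)=(b_0,\dots,b_{2k-1})\in\{0,1\}^{2k}$ with $b_i=1$ iff $p+\epsilon_i\in C$. $\mathrm{ai}(v,t,C)$ is the symbol $\mathrm{Q}$ if $\mathrm{d}_C(\mathbf 0,v)>t$, and otherwise the triple $(t,v,\{(v',\mathrm{bc}_C(v')) : v'\in C,\ \mathrm{d}_C(\mathbf 0,v')+\mathrm{d}_C(v',v)\le t\})$. $C\equiv'_{t,v}C'$ means $v\in C\cap C'$ and $\mathrm{ai}(v,t,C)=\mathrm{ai}(v,t,C')\neq\mathrm{Q}$.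 $M(v,t,C)=\{v'\in C:\mathrm{d}_C(\mathbf 0,v')+\mathrm{d}_C(v',v)\le t\}$. $C'$ is a consistent extension of a subset $M$ of $C$ if $M\subseteq C'$ and $\mathrm{bc}_C(w)=\mathrm{bc}_{C'}(w)$ for all $w\in M$. *)

(* Defs.v *)
From mathcomp Require Import all_boot all_algebra.
From mathcomp Require Import boolp.
Set Implicit Arguments. Unset Strict Implicit. Unset Printing Implicit Defensive.
Local Open Scope ring_scope.

Section GkPath.
Variable k : nat.

Definition pos := {ffun 'I_k -> int}.
Definition origin : pos := [ffun => 0].
Definition padd (p q : pos) : pos := [ffun j => p j + q j].

(* the 2k vectors eps_0..eps_{2k-1}, fixed order: +e_0,..,+e_{k-1},-e_0,..,-e_{k-1} *)
Definition eps (i : 'I_(k + k)) : pos :=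
  match split i with
  | inl a => [ffun j => ((j == a) : nat)%:Z]
  | inr a => [ffun j => - ((j == a) : nat)%:Z]
  end.

Definition adjacent (p p' : pos) : Prop := exists i, p' = padd p (eps i).

Definition is_config (s : seq pos) : Prop :=
  [/\ exists2 i, (i < size s)%N & nth origin s i = origin,
      (forall l, (l.+1 < size s)%N -> adjacent (nth origin s l) (nth origin s l.+1)),
      uniq s &
      (forall l m, (l < size s)%N -> (m < size s)%N -> (l.+1 < m \/ m.+1 < l)%N ->
          ~ adjacent (nth origin s l) (nth origin s m))].

Definition walk (C : seq pos) (p p' : pos) (n : nat) : Prop :=
  exists w : seq pos, [/\ size w = n.+1, nth origin w 0 = p, nth origin w n = p',
    (forall j, (j <= n)%N -> nth origin w j \in C) &
    (forall j, (j < n)%N -> adjacent (nth origin w j) (nth origin w j.+1))].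

Definition connected_in (C : seq pos) (p p' : pos) : Prop := exists n, walk C p p' n.

Lemma connected_in_ex C p p' : connected_in C p p' -> exists n, `[< walk C p p' n >].
Proof. by case=> n Hn; exists n; apply/asboolP. Qed.

(* d_C(p,p'): number of steps of a shortest path from p to p' inside C
   (only meaningful when such a path exists; 0 otherwise) *)
Definition dC (C : seq pos) (p p' : pos) : nat :=
  match pselect (connected_in C p p') with
  | left H => ex_minn (connected_in_ex H)
  | right _ => 0%N
  end.

Definition bcT := {ffun 'I_(k + k) -> bool}.
Definition bc (C : seq pos) (p : pos) : bcT := [ffun i => padd p (eps i) \in C].

Definition Mset (v : pos) (t : nat) (C : seq pos) : pos -> Prop :=
  fun v' => v' \in C /\ (dC C origin v' + dC C v' v <= t)%N.

(* ai(v,t,C): None encodes the symbol Q (d_C(0,v) > t, or v unreachable) *)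
Definition ai (v : pos) (t : nat) (C : seq pos)
  : option (nat * pos * (pos * bcT -> Prop)) :=
  if `[< connected_in C origin v /\ (dC C origin v <= t)%N >] then
    Some (t, v, fun x => Mset v t C x.1 /\ x.2 = bc C x.1)
  else None.

Definition equiv' (t : nat) (v : pos) (C C' : seq pos) : Prop :=
  [/\ v \in C, v \in C', ai v t C = ai v t C' & ai v t C <> None].

Definition consistent_extension (C' : seq pos) (M : pos -> Prop) (C : seq pos) : Prop :=
  (forall w, M w -> w \in C') /\ (forall w, M w -> bc C w = bc C' w).

End GkPath.

(* Main.v *)
Require Import Defs.
From mathcomp Require Import all_boot all_algebra.
From mathcomp Require Import boolp.
From mathcomp Require Import zify.

Set Implicit Arguments. Unset Strict Implicit. Unset Printing Implicit Defensive.

Section S.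
Variable k : nat.
Implicit Types (C : seq (pos k)) (p q : pos k).

Lemma adj_sym p q : adjacent p q -> adjacent q p.
Proof.
case=> i ->.
exists (unsplit (match split i with inl a => inr a | inr a => inl a end)).
apply/ffunP => x; rewrite /padd /eps !ffunE unsplitK.
case: (split i) => a /=; rewrite ffunE ffunE; [rewrite GRing.addrK | rewrite GRing.subrK]; by [].
Qed.

Lemma adj_irr p : ~ adjacent p p.
Proof.
case=> i /(congr1 (fun f : pos k => f (match split i with inl a => a | inr a => a end))).
rewrite /padd /eps ffunE; case: (split i) => a; rewrite ffunE eqxx /=.
- move/eqP; rewrite -{1}(GRing.addr0 (p a)) (inj_eq (GRing.addrI _)) //.
- move/eqP; rewrite -{1}(GRing.addr0 (p a)) (inj_eq (GRing.addrI _)) //.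
Qed.

Lemma cfg_adj C l m : is_config C -> (l < size C)%N -> (m < size C)%N ->
  adjacent (nth (origin k) C l) (nth (origin k) C m) -> m = l.+1 \/ l = m.+1.
Proof.
case=> _ _ _ h4 hl hm hadj.
have [e|ne] := eqVneq l m; first by subst; case: (adj_irr hadj).
have : ~ (l.+1 < m \/ m.+1 < l)%N by move=> H; exact: (h4 l m hl hm H hadj).
lia.
Qed.

Lemma cfg_adj_idx C p q : is_config C -> p \in C -> q \in C -> adjacent p q ->
  index q C = (index p C).+1 \/ index p C = (index q C).+1.
Proof.
move=> hC hp hq.
rewrite -{1}(nth_index (origin k) hp) -{1}(nth_index (origin k) hq).
apply: cfg_adj => //; by rewrite index_mem.
Qed.

Lemma cfg_step C l : is_config C -> (l.+1 < size C)%N ->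
  adjacent (nth (origin k) C l) (nth (origin k) C l.+1) /\
  adjacent (nth (origin k) C l.+1) (nth (origin k) C l).
Proof. case=> _ h2 _ _ hl; have := h2 l hl => h; split=> //; exact: adj_sym. Qed.

Definition dd (a b : nat) := ((a - b) + (b - a))%N.

Lemma walk_lb C p q n : is_config C -> walk C p q n ->
  (dd (index p C) (index q C) <= n)%N.
Proof.
move=> hC [w [hs h0 hn hin hadj]].
suff H : forall j, (j <= n)%N -> (dd (index p C) (index (nth (origin k) w j) C) <= j)%N.
  by have := H n (leqnn n); rewrite hn.
elim=> [|j IH] hj; first by rewrite h0 /dd; lia.
have := IH (ltnW hj).
have := cfg_adj_idx hC (hin j (ltnW hj)) (hin j.+1 hj) (hadj j hj).
rewrite /dd; lia.
Qed.

Lemma walk_up C i j : is_config C -> (i <= j)%N -> (j < size C)%N ->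
  walk C (nth (origin k) C i) (nth (origin k) C j) (j - i).
Proof.
move=> hC hij hj.
exists (mkseq (fun x => nth (origin k) C (i + x)) (j - i).+1); split.
- by rewrite size_mkseq.
- by rewrite nth_mkseq // addn0.
- by rewrite nth_mkseq // subnKC.
- move=> x hx; rewrite nth_mkseq ?ltnS //; have h : (i + x < size C)%N by lia.
  exact: mem_nth.
- move=> x hx; rewrite !nth_mkseq ?ltnS ?(ltnW hx) // addnS.
  by case: (cfg_step (l := i + x) hC ltac:(lia)).
Qed.

Lemma walk_down C i j : is_config C -> (i <= j)%N -> (j < size C)%N ->
  walk C (nth (origin k) C j) (nth (origin k) C i) (j - i).
Proof.
move=> hC hij hj.
exists (mkseq (fun x => nth (origin k) C (j - x)) (j - i).+1); split.
- by rewrite size_mkseq.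
- by rewrite nth_mkseq // subn0.
- by rewrite nth_mkseq // subKn.
- move=> x hx; rewrite nth_mkseq ?ltnS //; have h : (j - x < size C)%N by lia.
  exact: mem_nth.
- move=> x hx; rewrite !nth_mkseq ?ltnS ?(ltnW hx) //.
  have -> : (j - x = (j - x.+1).+1)%N by lia.
  by case: (cfg_step (l := j - x.+1) hC ltac:(lia)).
Qed.

Lemma walk_ex C p q : is_config C -> p \in C -> q \in C ->
  walk C p q (dd (index p C) (index q C)).
Proof.
move=> hC hp hq.
rewrite -{1}(nth_index (origin k) hp) -{1}(nth_index (origin k) hq).
have := hp; rewrite -index_mem => hp'; have := hq; rewrite -index_mem => hq'.
case: (leqP (index p C) (index q C)) => h.
- have -> : dd (index p C) (index q C) = (index q C - index p C)%N by rewrite /dd; lia.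
  exact: walk_up.
- have -> : dd (index p C) (index q C) = (index p C - index q C)%N by rewrite /dd; lia.
  apply: walk_down => //; lia.
Qed.

Lemma dC_spec C p q : connected_in C p q ->
  walk C p q (dC C p q) /\ forall n, walk C p q n -> (dC C p q <= n)%N.
Proof.
move=> H0; rewrite /dC; case: pselect => [H|//].
case: ex_minnP => m /asboolP Hm Hmin; split => // n Hn; apply: Hmin; exact/asboolP.
Qed.

Lemma dC_eq C p q : is_config C -> p \in C -> q \in C ->
  connected_in C p q /\ dC C p q = dd (index p C) (index q C).
Proof.
move=> hC hp hq.
have hw := walk_ex hC hp hq.
have hc : connected_in C p q by exists (dd (index p C) (index q C)).
split=> //; case: (dC_spec hc) => h1 h2.
apply/eqP; rewrite eqn_leq h2 //=; exact: walk_lb h1.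
Qed.
End S.

Lemma backward k (C C' : seq (pos k)) (v : pos k) (t : nat) :
  is_config C -> is_config C' -> v \in C -> (dC C (origin k) v <= t)%N ->
  consistent_extension C' (Mset v t C) C -> equiv' t v C C'.
Proof.
move=> hC hC' hv ht [CE1 CE2].
have uC : uniq C by case: hC.
have uC' : uniq C' by case: hC'.
have o_in : origin k \in C by case: hC => [[i hi <-]] *; exact: mem_nth.
have [conC0v dCv] := dC_eq hC o_in hv.
set i0 := index (origin k) C.
set iv := index v C.
have i0n : (i0 < size C)%N by rewrite index_mem.
have ivn : (iv < size C)%N by rewrite index_mem.
pose inM i := (i < size C)%N /\ (dd i i0 + dd i iv <= t)%N.
have MsetC : forall x, Mset v t C x <-> x \in C /\ inM (index x C).
  move=> x; split.
  - case=> hx hs; split=> //; split; first by rewrite index_mem.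
    move: hs; rewrite (dC_eq hC o_in hx).2 (dC_eq hC hx hv).2 /dd; lia.
  - case=> hx [_ hs]; split => //.
    rewrite (dC_eq hC o_in hx).2 (dC_eq hC hx hv).2; move: hs; rewrite /dd; lia.
have Mnth : forall i, inM i -> Mset v t C (nth (origin k) C i).
  move=> i hi; have hin : (i < size C)%N by case: hi.
  apply/MsetC; split; first exact: mem_nth.
  by rewrite index_uniq.
pose g i := index (nth (origin k) C i) C'.
have gin : forall i, inM i -> nth (origin k) C i \in C' by move=> i /Mnth /CE1.
have gn : forall i, inM i -> (g i < size C')%N by move=> i /gin; rewrite index_mem.
have gnth : forall i, inM i -> nth (origin k) C' (g i) = nth (origin k) C i.
  by move=> i /gin /(nth_index (origin k)).
have conv : forall i j l, inM i -> inM j -> (i <= l)%N -> (l <= j)%N -> inM l.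
  move=> i j l; rewrite /inM /dd; lia.
have gstep : forall i, inM i -> inM i.+1 -> g i.+1 = (g i).+1 \/ g i = (g i.+1).+1.
  move=> i hi hi1.
  have hs : (i.+1 < size C)%N by case: hi1.
  exact: (cfg_adj_idx hC' (gin _ hi) (gin _ hi1) (cfg_step hC hs).1).
have ginj : forall i j, inM i -> inM j -> g i = g j -> i = j.
  move=> i j hi hj e; have := congr1 (nth (origin k) C') e; rewrite !gnth //.
  have hi' : (i < size C)%N by case: hi.
  have hj' : (j < size C)%N by case: hj.
  by move/eqP; rewrite nth_uniq // => /eqP.
have gtriple : forall i, inM i -> inM i.+2 ->
    (g i.+1 = (g i).+1 <-> g i.+2 = (g i.+1).+1).
  move=> i hi hi2.
  have hi1 : inM i.+1 by apply: (conv i i.+2) => //; lia.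
  have := gstep i hi hi1; have := gstep i.+1 hi1 hi2.
  have : g i.+2 <> g i by move=> E; have := ginj _ _ hi2 hi E; lia.
  lia.
have same : forall d i, inM i -> inM (i + d).+1 ->
    (g i.+1 = (g i).+1 <-> g (i + d).+1 = (g (i + d)).+1).
  elim=> [|d IH] i hi hid; first by rewrite addn0.
  have hid' : inM (i + d).+1 by apply: (conv i (i + d.+1).+1) => //; lia.
  rewrite (IH i hi hid') addnS; apply: gtriple.
    by apply: (conv i (i + d.+1).+1) => //; lia.
  by rewrite -addnS.
have dir : (forall i, inM i -> inM i.+1 -> g i.+1 = (g i).+1) \/
           (forall i, inM i -> inM i.+1 -> g i = (g i.+1).+1).
  case: (pselect (exists i, [/\ inM i, inM i.+1 & g i.+1 = (g i).+1])).
  - case=> a [ha ha1 hga]; left => j hj hj1.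
    case: (leqP a j) => hle.
    + have e : (a + (j - a))%N = j by lia.
      have := same (j - a) a ha; rewrite e => H; exact: (H hj1).1.
    + have e : (j + (a - j))%N = a by lia.
      have := same (a - j) j hj; rewrite e => H; exact: (H ha1).2.
  - move=> hn; right => j hj hj1; case: (gstep j hj hj1) => // e.
    by exfalso; apply: hn; exists j.
have chain_up : (forall i, inM i -> inM i.+1 -> g i.+1 = (g i).+1) ->
    forall d i, inM i -> inM (i + d) -> g (i + d) = (g i + d)%N.
  move=> H; elim=> [|d IH] i hi hid; first by rewrite !addn0.
  have hid' : inM (i + d) by apply: (conv i (i + d.+1)) => //; lia.
  rewrite addnS (H _ hid') ?IH // -?addnS //.
have chain_dn : (forall i, inM i -> inM i.+1 -> g i = (g i.+1).+1) ->
    forall d i, inM i -> inM (i + d) -> g i = (g (i + d) + d)%N.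
  move=> H; elim=> [|d IH] i hi hid; first by rewrite !addn0.
  have hid' : inM (i + d) by apply: (conv i (i + d.+1)) => //; lia.
  rewrite (IH i hi hid') (H _ hid'); last by rewrite -addnS.
  by rewrite addnS addSn addnS.
have hi0 : inM i0 by split=> //; move: dCv ht; rewrite /dd; lia.
have hiv : inM iv by split=> //; move: dCv ht; rewrite /dd; lia.
have form : (forall i, inM i -> (g i + i0 = g i0 + i)%N) \/
            (forall i, inM i -> (g i + i = g i0 + i0)%N).
  case: dir => H; [left|right] => i hi; case: (leqP i0 i) => hle.
  - have e : (i0 + (i - i0))%N = i by lia.
    have := chain_up H (i - i0) i0 hi0; rewrite e => /(_ hi); lia.
  - have e : (i + (i0 - i))%N = i0 by lia.
    have := chain_up H (i0 - i) i hi; rewrite e => /(_ hi0); lia.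
  - have e : (i0 + (i - i0))%N = i by lia.
    have := chain_dn H (i - i0) i0 hi0; rewrite e => /(_ hi); lia.
  - have e : (i + (i0 - i))%N = i0 by lia.
    have := chain_dn H (i0 - i) i hi; rewrite e => /(_ hi0); lia.
have escape : forall e j', inM e -> (j' < size C')%N -> (j' = (g e).+1 \/ g e = j'.+1) ->
   exists i2, [/\ (i2 < size C)%N, (i2 = e.+1 \/ e = i2.+1) & (inM i2 -> g i2 = j')].
  move=> e j' he hj' hadj.
  set p := nth (origin k) C e; set y := nth (origin k) C' j'.
  have hpy : adjacent p y.
    rewrite /p -(gnth e he) /y.
    have ge := gn e he.
    case: hadj => E.
    - have hs : ((g e).+1 < size C')%N by rewrite -E.
      by rewrite E; case: (cfg_step hC' hs).
    - have hs : (j'.+1 < size C')%N by rewrite -E.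
      by rewrite E; case: (cfg_step hC' hs).
  have yC' : y \in C' by exact: mem_nth.
  have yC : y \in C.
    case: hpy => d hd; have := CE2 _ (Mnth e he).
    move=> Eb; have := congr1 (fun f : bcT k => f d) Eb.
    by rewrite /bc !ffunE -hd yC' => ->.
  have he' : (e < size C)%N by case: he.
  have pC : p \in C by exact: mem_nth.
  exists (index y C); split.
  - by rewrite index_mem.
  - by have := cfg_adj_idx hC pC yC hpy; rewrite /p index_uniq.
  - move=> hi2; rewrite /g nth_index // /y index_uniq //.
have FB : forall i, inM i -> (g i + i0 = g i0 + i)%N \/ (g i + i = g i0 + i0)%N.
  by move=> i hi; case: form => H; [left|right]; apply: H.
have g0n := gn i0 hi0.
have cover : forall j, (j < size C')%N -> (dd j (g i0) + dd j (g iv) <= t)%N ->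
    exists i, inM i /\ g i = j.
  move=> j hj hb.
  have hsz : (0 < size C)%N by lia.
  case: form => F; have Fv := F iv hiv; move: hb; rewrite /dd => hb.
  - case: (ltnP (j + i0) (g i0)) => ha.
    + have h0 : inM 0 by rewrite /inM /dd; lia.
      have g0 := F 0 h0.
      have [i2 [hi2 hor himp]] := escape 0 (g 0).-1 h0 ltac:(have := gn 0 h0; lia) ltac:(lia).
      have h1 : inM i2 by rewrite /inM /dd; lia.
      have := F i2 h1; have := himp h1; lia.
    case: (ltnP (j + i0 - g i0) (size C)) => hb2.
    + exists (j + i0 - g i0)%N; have hi : inM (j + i0 - g i0) by rewrite /inM /dd; lia.
      by split=> //; have := F _ hi; lia.
    + pose e := (size C).-1.
      have eE : (e + 1 = size C)%N by rewrite /e; lia.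
      have he : inM e by rewrite /inM /dd; lia.
      have ge := F e he.
      have [i2 [hi2 hor himp]] := escape e (g e).+1 he ltac:(lia) ltac:(lia).
      have h1 : inM i2 by rewrite /inM /dd; lia.
      have := F i2 h1; have := himp h1; lia.
  - case: (ltnP (g i0 + i0) j) => ha.
    + have h0 : inM 0 by rewrite /inM /dd; lia.
      have g0 := F 0 h0.
      have [i2 [hi2 hor himp]] := escape 0 (g 0).+1 h0 ltac:(lia) ltac:(lia).
      have h1 : inM i2 by rewrite /inM /dd; lia.
      have := F i2 h1; have := himp h1; lia.
    case: (ltnP (g i0 + i0 - j) (size C)) => hb2.
    + exists (g i0 + i0 - j)%N; have hi : inM (g i0 + i0 - j) by rewrite /inM /dd; lia.
      by split=> //; have := F _ hi; lia.
    + pose e := (size C).-1.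
      have eE : (e + 1 = size C)%N by rewrite /e; lia.
      have he : inM e by rewrite /inM /dd; lia.
      have ge := F e he.
      have [i2 [hi2 hor himp]] := escape e (g e).-1 he ltac:(have := gn e he; lia) ltac:(lia).
      have h1 : inM i2 by rewrite /inM /dd; lia.
      have := F i2 h1; have := himp h1; lia.
have oC' : origin k \in C' by have := gin i0 hi0; rewrite /i0 nth_index.
have vC' : v \in C' by have := gin iv hiv; rewrite /iv nth_index.
have go : index (origin k) C' = g i0 by rewrite /g /i0 nth_index.
have gv : index v C' = g iv by rewrite /g /iv nth_index.
have Fv := FB iv hiv.
have MsetC' : forall x, Mset v t C' x <->
    x \in C' /\ (dd (index x C') (g i0) + dd (index x C') (g iv) <= t)%N.
  move=> x; split.
  - case=> hx hs; split=> //.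
    move: hs; rewrite (dC_eq hC' oC' hx).2 (dC_eq hC' hx vC').2 go gv /dd; lia.
  - case=> hx hs; split => //.
    rewrite (dC_eq hC' oC' hx).2 (dC_eq hC' hx vC').2 go gv; move: hs; rewrite /dd; lia.
have eqM : forall x, Mset v t C x <-> Mset v t C' x.
  move=> x; split.
  - move/MsetC=> [hx hix]; apply/MsetC'.
    have xe : nth (origin k) C (index x C) = x by rewrite nth_index.
    have xC' := gin _ hix; rewrite xe in xC'.
    split=> //.
    have -> : index x C' = g (index x C) by rewrite /g xe.
    case: form => F; have := F _ hix; have := F _ hiv; move: hix; rewrite /inM /dd; lia.
  - move/MsetC'=> [hx hs].
    have hj : (index x C' < size C')%N by rewrite index_mem.
    have [i [hi gi]] := cover _ hj hs.
    have -> : x = nth (origin k) C i by rewrite -gnth // gi nth_index.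
    exact: Mnth.
have condC : connected_in C (origin k) v /\ (dC C (origin k) v <= t)%N by [].
have condC' : connected_in C' (origin k) v /\ (dC C' (origin k) v <= t)%N.
  have [c d] := dC_eq hC' oC' vC'; split=> //; rewrite d go gv.
  case: form => F; have := F _ hiv; move: dCv ht; rewrite /dd; lia.
split=> //; rewrite /ai (asboolT condC) ?(asboolT condC') //.
congr (Some (_, _, _)); apply: funext => -[w b] /=; apply: propext; split.
- by case=> hM ->; split; [apply/eqM | apply: CE2].
- case=> hM ->; have hM' : Mset v t C w by apply/eqM.
  by split=> //; rewrite CE2.
Qed.

Lemma forward k (C C' : seq (pos k)) (v : pos k) (t : nat) :
  equiv' t v C C' -> consistent_extension C' (Mset v t C) C.
Proof.
case=> _ _ Hai Hne.
move: Hai Hne; rewrite /ai; case: ifP => // _; case: ifP => // _ E _.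
case: E => E.
have key : forall w, Mset v t C w -> Mset v t C' w /\ bc C w = bc C' w.
  move=> w hw; have := congr1 (fun P => P (w, bc C w)) E => /= E2.
  by rewrite -E2.
by split=> w /key [[]].
Qed.

Theorem theorem3 (k : nat) (hk : k = 2 \/ k = 3) (C C' : seq (pos k))
  (hC : is_config C) (hC' : is_config C') (v : pos k) (hv : v \in C)
  (t : nat) (ht : (dC C (origin k) v <= t)%N) :
  equiv' t v C C' <-> consistent_extension C' (Mset v t C) C.
Proof.
split; [exact: forward | exact: backward].
Qed.
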